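(* Consider Algorithm iR2N (described in the context) and suppose (A4) holds. Then for every iteration $k$, $$\varphi(0;x_k)+\psi(0;x_k)-\big(\varphi(s_k;x_k)+\psi(s_k;x_k)\big)\ \ge\ \tfrac12(1-\theta_1)\theta_2^{-2}\nu_k^{-1}\|s_k\|^2.$$
   Context: Setting. $f:\mathbb{R}^n\to\mathbb{R}$ is continuously differentiable, $h:\mathbb{R}^n\to\mathbb{R}\cup\{+\infty\}$ is proper and lower semicontinuous; the problem is $\min_x f(x)+h(x)$. $\|\cdot\|$ is the Euclidean norm (spectral norm for matrices). For each $x$, approximations $\hat f(x)\in\mathbb{R}$ of $f(x)$ and $\hat\nabla f(x)\in\mathbb{R}^n$ of $\nabla f(x)$ are available. For each $x$, $\psi(\cdot;x):\mathbb{R}^n\to\mathbb{R}\cup\{+\infty\}$ is proper, lsc, satisfies $\psi(0;x)=h(x)$ and $\partial\psi(0;x)\subseteq\partial h(x)$ ($\partial$ = limiting subdifferential), and is uniformly prox-bounded: there is $\lambda>0$ such that for every $x$ and every $0<\lambda'<\lambda$, $w\mapsto\psi(w;x)+\tfrac{1}{2\lambda'}\|w\|^2$ is bounded below. Models: $\varphi_{\mathrm{cp}}(s;x)=\hat f(x)+\hat\nabla f(x)^Ts$; $m_{\mathrm{cp}}(s;x,\nu^{-1})=\varphi_{\mathrm{cp}}(s;x)+\tfrac12\nu^{-1}\|s\|^2+\psi(s;x)$; for a symmetric $B(x)\in\mathbb{R}^{n\times n}$, $\varphi(s;x)=\hat f(x)+\hat\nabla f(x)^Ts+\tfrac12 s^TB(x)s$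 and $m(s;x,\sigma)=\varphi(s;x)+\tfrac12\sigma\|s\|^2+\psi(s;x)$. Algorithm iR2N. Constants: $\kappa_f,\kappa_\nabla>0$, $0<\gamma_3\le 1<\gamma_1\le\gamma_2$, $0<\hat\eta_1\le\hat\eta_2<1$, $0<\theta_1<1<\theta_2$, $\sigma_{\min}>4\kappa_f\theta_1\theta_2^2/(\hat\eta_1(1-\theta_1))$, $\sigma_0\ge\sigma_{\min}$, $x_0\in\mathbb{R}^n$. At iteration $k=0,1,\dots$: choose symmetric $B_k=B(x_k)$; set $\nu_k=\theta_1/(\|B_k\|+\sigma_k)$; compute $\hat s_{k,\mathrm{cp}}$ with $m_{\mathrm{cp}}(\hat s_{k,\mathrm{cp}};x_k,\nu_k^{-1})\le m_{\mathrm{cp}}(0;x_k,\nu_k^{-1})$ (an approximate minimizer of $m_{\mathrm{cp}}(\cdot;x_k,\nu_k^{-1})$ obtained by a descent procedure from $s=0$) and set $\hat\xi_{k,\mathrm{cp}}=(\varphi_{\mathrm{cp}}+\psi)(0;x_k)-(\varphi_{\mathrm{cp}}+\psi)(\hat s_{k,\mathrm{cp}};x_k)$; compute $s_k$ with $m(s_k;x_k,\sigma_k)\le m(\hat s_{k,\mathrm{cp}};x_k,\sigma_k)$; if $\|s_k\|>\theta_2\|\hat s_{k,\mathrm{cp}}\|$, reset $s_k=\hat s_{k,\mathrm{cp}}$ (these computations are repeated with refined $\hat f,\hat\nabla f$ until the inexactness bounds (A6) hold: $|f(x_k)-\hat f(x_k)|\le\kappa_f\|s_k\|^2$, $|f(x_k+s_k)-\hat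 f(x_k+s_k)|\le\kappa_f\|s_k\|^2$, $\|\nabla f(x_k)-\hat\nabla f(x_k)\|\le\kappa_\nabla\|s_k\|$). Compute $$\hat\rho_k=\frac{\hat f(x_k)+h(x_k)-\hat f(x_k+s_k)-h(x_k+s_k)}{\varphi(0;x_k)+\psi(0;x_k)-\varphi(s_k;x_k)-\psi(s_k;x_k)},$$ where $\varphi(\cdot;x_k)$ uses $B_k$. If $\hat\rho_k\ge\hat\eta_1$ (successful) set $x_{k+1}=x_k+s_k$, else $x_{k+1}=x_k$. Choose $\sigma_{k+1}\in[\gamma_3\sigma_k,\sigma_k]$ if $\hat\rho_k\ge\hat\eta_2$ (very successful), $\sigma_{k+1}\in[\sigma_k,\gamma_1\sigma_k]$ if $\hat\eta_1\le\hat\rho_k<\hat\eta_2$, $\sigma_{k+1}\in[\gamma_1\sigma_k,\gamma_2\sigma_k]$ if $\hat\rho_k<\hat\eta_1$; then reset $\sigma_{k+1}=\max(\sigma_{k+1},\sigma_{\min})$. (A4): for all $k$, $\varphi(0;x_k)+\psi(0;x_k)-(\varphi(s_k;x_k)+\psi(s_k;x_k))\ge(1-\theta_1)\hat\xi_{k,\mathrm{cp}}$. *)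

(* Defs.v *)
From HB Require Import structures.
From mathcomp Require Import all_boot all_order all_algebra.
From mathcomp Require Import all_classical all_reals all_analysis.
Set Implicit Arguments. Unset Strict Implicit. Unset Printing Implicit Defensive.
Import Order.TTheory GRing.Theory Num.Theory.
Local Open Scope classical_set_scope.
Local Open Scope ring_scope.

Section Defs.
Variables (R : realType) (n : nat).

Definition vdot (u v : 'cV[R]_n) : R := \sum_(i < n) u i 0 * v i 0.
Definition vnorm (v : 'cV[R]_n) : R := Num.sqrt (vdot v v).

Definition specnorm (B : 'M[R]_n) : R :=
  sup [set vnorm (B *m v) | v in [set v : 'cV[R]_n | vnorm v <= 1]].

Definition phi_cp (fh : R) (gh s : 'cV[R]_n) : R := fh + vdot gh s.

Definition m_cp (fh : R) (gh : 'cV[R]_n) (psix : 'cV[R]_n -> \bar R)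
  (nuinv : R) (s : 'cV[R]_n) : \bar R :=
  ((phi_cp fh gh s + 2^-1 * nuinv * vnorm s ^+ 2)%:E + psix s)%E.

Definition phi_q (fh : R) (gh : 'cV[R]_n) (B : 'M[R]_n) (s : 'cV[R]_n) : R :=
  fh + vdot gh s + 2^-1 * vdot s (B *m s).

Definition m_q (fh : R) (gh : 'cV[R]_n) (B : 'M[R]_n) (psix : 'cV[R]_n -> \bar R)
  (sigma : R) (s : 'cV[R]_n) : \bar R :=
  ((phi_q fh gh B s + 2^-1 * sigma * vnorm s ^+ 2)%:E + psix s)%E.

Definition proper_fun (g : 'cV[R]_n -> \bar R) : Prop :=
  (forall w, g w != -oo%E) /\ (exists w, g w \is a fin_num).

Definition unif_prox_bounded (psi : 'cV[R]_n -> 'cV[R]_n -> \bar R) : Prop :=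
  exists lam : R, 0 < lam /\
    forall (x : 'cV[R]_n) (lam' : R), 0 < lam' < lam ->
      exists c : R, forall w,
        (c%:E <= psi x w + (vnorm w ^+ 2 / (2 * lam'))%:E)%E.

Definition xi_cp (fh : R) (gh : 'cV[R]_n) (psix : 'cV[R]_n -> \bar R)
  (scp : 'cV[R]_n) : \bar R :=
  (((phi_cp fh gh (0%R : 'cV[R]_n))%:E + psix (0%R : 'cV[R]_n)) - ((phi_cp fh gh scp)%:E + psix scp))%E.

Definition model_decrease (fh : R) (gh : 'cV[R]_n) (B : 'M[R]_n)
  (psix : 'cV[R]_n -> \bar R) (s : 'cV[R]_n) : \bar R :=
  (((phi_q fh gh B (0%R : 'cV[R]_n))%:E + psix (0%R : 'cV[R]_n)) - ((phi_q fh gh B s)%:E + psix s))%E.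

(* rho_hat as a real number: (extended-real) numerator over denominator,
   each converted to R by [fine] (an infinite numerator such as
   h(x_k+s_k) = +oo gives rho_hat = 0, i.e. an unsuccessful step) *)
Definition rho_hat (h : 'cV[R]_n -> \bar R) (psix : 'cV[R]_n -> \bar R)
  (xk : 'cV[R]_n) (fh_x fh_xs : R) (gh : 'cV[R]_n) (B : 'M[R]_n)
  (s : 'cV[R]_n) : R :=
  fine ((fh_x%:E + h xk) - (fh_xs%:E + h (xk + s)%R))%E
  / fine (model_decrease fh_x gh B psix s).

(* At iteration k:
   fh k = \hat f(x_k), fhs k = \hat f(x_k + s_k), gh k = \hat\nabla f(x_k)
   (the final, refined approximations), B k = B_k, sigma k = sigma_k,
   nu k = nu_k, scp k = \hat s_{k,cp}, strial k = the step computed before the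
   safeguard reset, s k = s_k. *)
Definition iR2N_run (h : 'cV[R]_n -> \bar R) (psi : 'cV[R]_n -> 'cV[R]_n -> \bar R)
  (theta1 theta2 eta1 eta2 gamma1 gamma2 gamma3 sigma_min : R)
  (x : nat -> 'cV[R]_n) (fh fhs : nat -> R) (gh : nat -> 'cV[R]_n)
  (B : nat -> 'M[R]_n) (sigma nu : nat -> R)
  (scp strial s : nat -> 'cV[R]_n) : Prop :=
  forall k : nat,
    let rho := rho_hat h (psi (x k)) (x k) (fh k) (fhs k) (gh k) (B k) (s k) in
    [/\ (B k)^T = B k /\ nu k = theta1 / (specnorm (B k) + sigma k),
        (m_cp (fh k) (gh k) (psi (x k)) (nu k)^-1 (scp k)
           <= m_cp (fh k) (gh k) (psi (x k)) (nu k)^-1 (0%R : 'cV[R]_n))%E,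
        (m_q (fh k) (gh k) (B k) (psi (x k)) (sigma k) (strial k)
           <= m_q (fh k) (gh k) (B k) (psi (x k)) (sigma k) (scp k))%E,
        (s k = (if vnorm (strial k) > theta2 * vnorm (scp k)
               then scp k else strial k)) /\
        x k.+1 = (if rho >= eta1 then x k + s k else x k) &
        (exists sig' : R,
          [/\ eta2 <= rho -> gamma3 * sigma k <= sig' <= sigma k,
              eta1 <= rho < eta2 -> sigma k <= sig' <= gamma1 * sigma k,
              rho < eta1 -> gamma1 * sigma k <= sig' <= gamma2 * sigma k &
              sigma k.+1 = Num.max sig' sigma_min])].

End Defs.

(* Main.v *)
Require Import Defs.
From HB Require Import structures.
From mathcomp Require Import all_boot all_order all_algebra.
From mathcomp Require Import all_classical all_reals all_analysis.
From mathcomp Require Import ring lra.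
Import Order.TTheory GRing.Theory Num.Theory.
Local Open Scope ring_scope.

Lemma vnorm0 (R : realType) (n : nat) : vnorm (0 : 'cV[R]_n) = 0.
Proof.
rewrite /vnorm /vdot big1 ?sqrtr0 // => i _; by rewrite mxE mul0r.
Qed.

Lemma vnorm_ge0 (R : realType) (n : nat) (v : 'cV[R]_n) : 0 <= vnorm v.
Proof. by rewrite /vnorm sqrtr_ge0. Qed.

Lemma specnorm_ge0 (R : realType) (n : nat) (B : 'M[R]_n) : 0 <= specnorm B.
Proof.
rewrite /specnorm.
have H0 : [set vnorm (B *m v) | v in [set v : 'cV[R]_n | vnorm v <= 1]]%classic 0.
  by exists 0; rewrite /= ?vnorm0 ?ler01 // mulmx0 vnorm0.
case: (pselect (has_sup [set vnorm (B *m v) | v in [set v : 'cV[R]_n | vnorm v <= 1]]%classic)) => Hs.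
  exact: sup_upper_bound Hs _ H0.
by rewrite sup_out.
Qed.

Theorem lemma3p2 (R : realType) (n : nat)
  (h : 'cV[R]_n -> \bar R) (psi : 'cV[R]_n -> 'cV[R]_n -> \bar R)
  (kappa_f kappa_g theta1 theta2 eta1 eta2 gamma1 gamma2 gamma3 sigma_min : R)
  (x : nat -> 'cV[R]_n) (fh fhs : nat -> R) (gh : nat -> 'cV[R]_n)
  (B : nat -> 'M[R]_n) (sigma nu : nat -> R)
  (scp strial s : nat -> 'cV[R]_n) :
  proper_fun h ->
  (forall xx, proper_fun (psi xx)) ->
  (forall xx, psi xx 0 = h xx) ->
  unif_prox_bounded psi ->
  h (x 0%N) \is a fin_num ->
  0 < kappa_f -> 0 < kappa_g ->
  0 < gamma3 <= 1 -> 1 < gamma1 <= gamma2 ->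
  0 < eta1 <= eta2 -> eta2 < 1 ->
  0 < theta1 < 1 -> 1 < theta2 ->
  4 * kappa_f * theta1 * theta2 ^+ 2 / (eta1 * (1 - theta1)) < sigma_min ->
  sigma_min <= sigma 0%N ->
  iR2N_run h psi theta1 theta2 eta1 eta2 gamma1 gamma2 gamma3 sigma_min
    x fh fhs gh B sigma nu scp strial s ->
  (* assumption (A4) *)
  (forall k, (model_decrease (fh k) (gh k) (B k) (psi (x k)) (s k)
               >= (1 - theta1)%:E * xi_cp (fh k) (gh k) (psi (x k)) (scp k))%E) ->
  forall k : nat,
    (model_decrease (fh k) (gh k) (B k) (psi (x k)) (s k)
      >= (2^-1 * (1 - theta1) * (theta2 ^+ 2)^-1 * (nu k)^-1
          * vnorm (s k) ^+ 2)%:E)%E.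
Proof.
move=> [hninf _] Hpsi Hpsi0 _ Hh0 Hkf _ _ _ /andP[He1 _] _ /andP[Ht1 Ht1'] Ht2 Hsm Hs0 Hrun HA4.
have Hsmpos : 0 < sigma_min.
  apply: le_lt_trans Hsm.
  apply: divr_ge0; last by apply: mulr_ge0; [exact: ltW|rewrite subr_ge0 ltW].
  have t2 : 0 <= theta2 by apply: ltW; apply: lt_trans Ht2.
  by rewrite !mulr_ge0 // ?exprn_ge0 // ltW.
have Hsig : forall k, sigma_min <= sigma k.
  elim=> // k _; have [_ _ _ _ [sig' [_ _ _ ->]]] := Hrun k.
  by rewrite le_max lexx orbT.
have hfin : forall k, h (x k) \is a fin_num.
  elim=> // k IH; have [_ _ _ [_ ->] _] := Hrun k.
  case: ifP => // Hrho.
  move: Hrho; rewrite /rho_hat.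
  have := hninf (x k + s k).
  rewrite -(fineK IH).
  case: (h (x k + s k)) => [r| |] //= _ Hrho.
  by rewrite mul0r in Hrho; have := lt_le_trans He1 Hrho; rewrite ltxx.
move=> k.
have [[_ Hnu] Hcp _ [Hsk _] _] := Hrun k.
have HA := HA4 k.
have [Pninf _] := Hpsi (x k).
move: Hcp HA; rewrite /m_cp /model_decrease /xi_cp Hpsi0 -(fineK (hfin k)).
have := Pninf (scp k); case: (psi (x k) (scp k)) => [d| |] //= _.
have := Pninf (s k); case: (psi (x k) (s k)) => [e| |] //= _.
rewrite !lee_fin => Hcp HA.
rewrite vnorm0 expr0n /= mulr0 addr0 in Hcp.
have HN : 0 <= (nu k)^-1.
  rewrite Hnu invf_div; apply: divr_ge0; last exact: ltW.
  apply: addr_ge0; first exact: specnorm_ge0.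
  exact: ltW (lt_le_trans Hsmpos (Hsig k)).
have t0 : 0 < theta2 by apply: lt_trans Ht2.
have Hsc : vnorm (s k) <= theta2 * vnorm (scp k).
  rewrite Hsk; case: ifP => [_|]; last by move/negbT; rewrite -leNgt.
  by rewrite ler_peMl ?vnorm_ge0 // ltW.
have Hq : vnorm (s k) ^+ 2 / theta2 ^+ 2 <= vnorm (scp k) ^+ 2.
  rewrite ler_pdivrMr ?exprn_gt0 // -exprMn mulrC.
  by rewrite ler_pXn2r ?nnegrE ?vnorm_ge0 // mulr_ge0 ?vnorm_ge0 // ltW.
set q := vnorm (s k) ^+ 2 / theta2 ^+ 2 in Hq.
have -> : 2^-1 * (1 - theta1) / theta2 ^+ 2 / nu k * vnorm (s k) ^+ 2
   = 2^-1 * (1 - theta1) * (nu k)^-1 * q.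
  by rewrite /q; ring.
set N := (nu k)^-1 in HN Hcp *.
have h1 : 0 <= (1 - theta1) * N * (vnorm (scp k) ^+ 2 - q).
  by rewrite !mulr_ge0 // ?subr_ge0 // ltW.
have h2 : 0 <= (1 - theta1) * (phi_cp (fh k) (gh k) 0 + fine (h (x k)) -
     (phi_cp (fh k) (gh k) (scp k) + d) - 2^-1 * N * vnorm (scp k) ^+ 2).
  apply: mulr_ge0; first by rewrite subr_ge0 ltW.
  rewrite subr_ge0; move: Hcp.
  set P1 := phi_cp _ _ 0; set Q1 := phi_cp _ _ (scp k); set A1 := 2^-1 * N * _; set F1 := fine _. lra.
move: HA h1 h2.
set P1 := phi_cp _ _ 0; set Q1 := phi_cp _ _ (scp k); set F1 := fine _.
set D1 := phi_q _ _ _ 0; set D2 := phi_q _ _ _ (s k); set c2 := vnorm (scp k) ^+ 2.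
clear -Ht1'. move=> HA h1 h2.
have E1 : (1 - theta1) * N * (c2 - q) = (1-theta1) * N * c2 - (1-theta1)*N*q by ring.
have E2 : (1 - theta1) * (P1 + F1 - (Q1 + d) - 2^-1 * N * c2) =
   (1 - theta1) * (P1 + F1 - (Q1 + d)) - 2^-1 * ((1-theta1) * N * c2) by ring.
rewrite E1 in h1; rewrite E2 in h2.
have -> : 2^-1 * (1 - theta1) * N * q = 2^-1 * ((1 - theta1) * N * q) by ring.
lra.
Qed.
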